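(* Let $\chi$ be a kernel as described in the context, and suppose in addition that its first-order algebraic moment vanishes identically: $m_1(\chi,u)=0$ for all $u\in\mathbb{R}^+$. Let $f\in C^{(2)}(\mathbb{R}^+)$. Then for every $x\in\mathbb{R}^+$, $$\lim_{w\to+\infty} w\big[(I_w^{\chi}f)(x)-f(x)\big]=\frac{(\theta f)(x)}{2}.$$
   Context: A kernel is a continuous function $\chi:\mathbb{R}^+\to\mathbb{R}$ satisfying: (i) $\sum_{k=-\infty}^{+\infty}\chi(e^{-k}u)=1$ for every $u\in\mathbb{R}^+$; (ii) $M_2(\chi)<+\infty$ and $\lim_{\gamma\to+\infty}\sum_{|k-\log u|>\gamma}|\chi(e^{-k}u)|\,|k-\log u|^2=0$ uniformly with respect to $u\in\mathbb{R}^+$. Algebraic moments: $m_\nu(\chi,u)=\sum_{k\in\mathbb{Z}}\chi(e^{-k}u)(k-\log u)^\nu$; absolute moments: $M_\nu(\chi,u)=\sum_{k\in\mathbb{Z}}|\chi(e^{-k}u)|\,|k-\log u|^\nu$, $M_\nu(\chi)=\sup_{u>0}M_\nu(\chi,u)$. For $w>0$, $x\in\mathbb{R}^+$: $(I_w^{\chi}f)(x)=\sum_{k\in\mathbb{Z}}\chi(e^{-k}x^w)\,w\int_{k/w}^{(k+1)/w}f(e^u)\,du$. Mellin differential operator: $(\theta f)(x)=xf'(x)$, and $\theta^1=\theta$, $\theta^r=\theta(\theta^{r-1})$. $C(\mathbb{R}^+)$ denotes the bounded continuous functions on $\mathbb{R}^+$, and $C^{(n)}(\mathbb{R}^+)$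 denotes the functions $f\in C(\mathbb{R}^+)$ such that $\theta^j f$ exists and belongs to $C(\mathbb{R}^+)$ for $j=1,\dots,n$. *)

(* Defs.v *)
From Stdlib Require Import Reals Lra ZArith Classical ClassicalEpsilon.
Open Scope R_scope.

(* Symmetric partial sum  sum_{k=-N}^{N} a k  of a doubly infinite series. *)
Definition zpsum (a : Z -> R) (N : nat) : R :=
  sum_f_R0 (fun i => a (Z.of_nat i - Z.of_nat N)%Z) (2 * N).

Definition zsum (a : Z -> R) (l : R) : Prop := Un_cv (zpsum a) l.

(* The value of sum_{k in Z} a k (0 by convention if it does not converge). *)
Definition Zser (a : Z -> R) : R :=
  match excluded_middle_informative (exists l, zsum a l) with
  | left H => proj1_sig (constructive_indefinite_description _ H)
  | right _ => 0
  end.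

(* Riemann integral of g over [a,b] (0 by convention if not integrable). *)
Definition RInt (g : R -> R) (a b : R) : R :=
  match excluded_middle_informative
          (exists pr : Riemann_integrable g a b, True) with
  | left H => RiemannInt (proj1_sig (constructive_indefinite_description _ H))
  | right _ => 0
  end.

Definition kernel (chi : R -> R) : Prop :=
  (forall u, 0 < u -> continuity_pt chi u) /\
  (forall u, 0 < u -> zsum (fun k => chi (exp (- IZR k) * u)) 1) /\
  (* (ii) M_2(chi) < +infinity *)
  (exists B, forall u, 0 < u -> forall N,
     zpsum (fun k => Rabs (chi (exp (- IZR k) * u)) * Rabs (IZR k - ln u) ^ 2) N
       <= B) /\
  (* (ii) uniform vanishing of the tails *)
  (forall eps, 0 < eps -> exists g0, forall g, g0 < g -> forall u, 0 < u ->
     forall N,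
       zpsum (fun k => if Rlt_dec g (Rabs (IZR k - ln u))
                       then Rabs (chi (exp (- IZR k) * u)) * Rabs (IZR k - ln u) ^ 2
                       else 0) N <= eps).

Definition m_moment_is (chi : R -> R) (nu : nat) (u l : R) : Prop :=
  zsum (fun k => chi (exp (- IZR k) * u) * (IZR k - ln u) ^ nu) l.

Definition Iw (chi f : R -> R) (w x : R) : R :=
  Zser (fun k => chi (exp (- IZR k) * Rpower x w)
                 * (w * RInt (fun u => f (exp u)) (IZR k / w) (IZR (k + 1) / w))).

Definition bcont (g : R -> R) : Prop :=
  (forall x, 0 < x -> continuity_pt g x) /\
  (exists B, forall x, 0 < x -> Rabs (g x) <= B).

Definition theta_of (g' : R -> R) : R -> R := fun x => x * g' x.

(* Main.v *)
Require Import Defs.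
From Stdlib Require Import Reals Lra Lia ZArith Classical ClassicalEpsilon.
From Coquelicot Require Import Coquelicot.
Open Scope R_scope.

Lemma zpsum_S a N : zpsum a (S N) =
  a (- Z.of_nat N - 1)%Z + zpsum a N + a (Z.of_nat N + 1)%Z.
Proof.
  unfold zpsum.
  replace (2 * S N)%nat with (S (S (2 * N))) by lia.
  rewrite tech5. rewrite decomp_sum by lia. simpl Init.Nat.pred.
  replace (a (Z.of_nat 0 - Z.of_nat (S N))%Z) with (a (- Z.of_nat N - 1)%Z)
    by (f_equal; lia).
  replace (a (Z.of_nat (S (S (2 * N))) - Z.of_nat (S N))%Z) with (a (Z.of_nat N + 1)%Z)
    by (f_equal; lia).
  rewrite (sum_eq _ (fun i => a (Z.of_nat i - Z.of_nat N)%Z)).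
  - simpl. reflexivity.
  - intros i _. f_equal. lia.
Qed.

Lemma zpsum_ext a b N : (forall k, a k = b k) -> zpsum a N = zpsum b N.
Proof. intros H; unfold zpsum; apply sum_eq; intros; apply H. Qed.

Lemma zpsum_plus a b N : zpsum (fun k => a k + b k) N = zpsum a N + zpsum b N.
Proof. unfold zpsum; apply sum_plus. Qed.

Lemma zpsum_scal c a N : zpsum (fun k => c * a k) N = c * zpsum a N.
Proof.
  unfold zpsum. generalize (2*N)%nat. intro n; induction n; simpl; [ring|].
  rewrite IHn; ring.
Qed.

Lemma zpsum_le a b N : (forall k, a k <= b k) -> zpsum a N <= zpsum b N.
Proof. intros H; unfold zpsum; apply sum_Rle; intros; apply H. Qed.

Lemma zpsum_abs a N : Rabs (zpsum a N) <= zpsum (fun k => Rabs (a k)) N.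
Proof.
  unfold zpsum. generalize (2*N)%nat. intro n; induction n; simpl; [lra|].
  eapply Rle_trans; [apply Rabs_triang|]. lra.
Qed.

Lemma zsum_ext a b l : (forall k, a k = b k) -> zsum a l -> zsum b l.
Proof.
  intros H Ha eps He. destruct (Ha eps He) as [N HN]. exists N; intros n Hn.
  rewrite <- (zpsum_ext a b n H). auto.
Qed.

Lemma zsum_plus a b la lb : zsum a la -> zsum b lb ->
  zsum (fun k => a k + b k) (la + lb).
Proof.
  intros Ha Hb. unfold zsum.
  apply (Un_cv_ext (fun n => zpsum a n + zpsum b n)).
  - intros; rewrite zpsum_plus; auto.
  - apply CV_plus; auto.
Qed.

Lemma zsum_scal c a l : zsum a l -> zsum (fun k => c * a k) (c * l).
Proof.
  intros Ha. unfold zsum.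
  apply (Un_cv_ext (fun n => c * zpsum a n)).
  - intros; rewrite zpsum_scal; auto.
  - apply (CV_mult (fun _ => c)); [intros e0 He0; exists 0%nat; intros; unfold R_dist; rewrite Rminus_diag, Rabs_R0; lra|auto].
Qed.

Lemma Zser_eq a l : zsum a l -> Zser a = l.
Proof.
  intros H. unfold Zser.
  destruct excluded_middle_informative as [e|n].
  - destruct constructive_indefinite_description as [l' Hl']. simpl.
    eapply UL_sequence; eauto.
  - exfalso; apply n; eauto.
Qed.

Lemma zsum_nonneg a M : (forall k, 0 <= a k) -> (forall N, zpsum a N <= M) ->
  exists l, zsum a l.
Proof.
  intros H0 HM.
  assert (Hg : Un_growing (zpsum a)).
  { intro n. rewrite zpsum_S. pose proof (H0 (- Z.of_nat n - 1)%Z).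
    pose proof (H0 (Z.of_nat n + 1)%Z). lra. }
  assert (Hb : has_ub (zpsum a)).
  { exists M. intros y [i ->]. apply HM. }
  destruct (growing_cv _ Hg Hb) as [l Hl]. exists l; exact Hl.
Qed.

Lemma lim_bound u l M : Un_cv u l -> (forall n, Rabs (u n) <= M) -> Rabs l <= M.
Proof.
  intros Hu HM. destruct (Rle_dec (Rabs l) M) as [h|h]; auto.
  exfalso. destruct (Hu (Rabs l - M)) as [N HN]; [lra|].
  specialize (HN N (le_n N)). unfold R_dist in HN. specialize (HM N).
  pose proof (Rabs_triang_inv l (u N)). rewrite Rabs_minus_sym in HN. lra.
Qed.

Lemma zsum_dom e D M : (forall k, Rabs (e k) <= D k) -> (forall N, zpsum D N <= M) ->
  exists l, zsum e l /\ Rabs l <= M.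
Proof.
  intros HD HM.
  destruct (zsum_nonneg (fun k => (Rabs (e k) + e k) / 2) M) as [lp Hp].
  { intros k. pose proof (Rle_abs (- e k)). rewrite Rabs_Ropp in H. lra. }
  { intros N. eapply Rle_trans; [|apply (HM N)]. apply zpsum_le. intros k.
    specialize (HD k). pose proof (Rle_abs (e k)). lra. }
  destruct (zsum_nonneg (fun k => (Rabs (e k) - e k) / 2) M) as [lm Hm].
  { intros k. pose proof (Rle_abs (e k)). lra. }
  { intros N. eapply Rle_trans; [|apply (HM N)]. apply zpsum_le. intros k.
    specialize (HD k). pose proof (Rle_abs (- e k)). rewrite Rabs_Ropp in H. lra. }
  exists (lp + (-1) * lm). split.
  - eapply zsum_ext; [|apply zsum_plus; [exact Hp| apply zsum_scal; exact Hm]].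
    intros k. simpl. field.
  - eapply lim_bound.
    + eapply zsum_ext; [|apply zsum_plus; [exact Hp| apply zsum_scal; exact Hm]].
      intros k. simpl. instantiate (1 := e). field.
    + intros n. eapply Rle_trans; [apply zpsum_abs|].
      eapply Rle_trans; [|apply (HM n)]. apply zpsum_le; auto.
Qed.

Lemma delta_sum A z c n : 0 <= A ->
  (sum_f_R0 (fun i => if Z.eq_dec (Z.of_nat i - c) z then A else 0) n = A
     /\ (0 <= z + c <= Z.of_nat n)%Z) \/
  (sum_f_R0 (fun i => if Z.eq_dec (Z.of_nat i - c) z then A else 0) n = 0
     /\ ~ (0 <= z + c <= Z.of_nat n)%Z).
Proof.
  intros HA. induction n; cbn [sum_f_R0]; rewrite ?Nat2Z.inj_succ.
  - destruct Z.eq_dec; [left|right]; split; auto; lia.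
  - destruct Z.eq_dec as [h|h]; destruct IHn as [[I1 I2]|[I1 I2]].
    + lia.
    + left; split; [lra|lia].
    + left; split; [lra|lia].
    + right; split; [lra|lia].
Qed.

Lemma zpsum_delta A z N : 0 <= A ->
  zpsum (fun k => if Z.eq_dec k z then A else 0) N <= A.
Proof.
  intros HA. unfold zpsum.
  destruct (delta_sum A z (Z.of_nat N) (2*N) HA) as [[h _]|[h _]]; lra.
Qed.

Lemma MVT_any f f' a b : (forall c, derivable_pt_lim f c (f' c)) ->
  exists c, f b - f a = f' c * (b - a) /\ Rabs (c - a) <= Rabs (b - a).
Proof.
  intros Hd. destruct (Rtotal_order a b) as [h|[h|h]].
  - destruct (MVT_cor2 f f' a b h (fun c _ => Hd c)) as [c [E1 E2]].
    exists c; split; auto. rewrite !Rabs_right by lra. lra.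
  - subst. exists b. split; [ring| lra].
  - destruct (MVT_cor2 f f' b a h (fun c _ => Hd c)) as [c [E1 E2]].
    exists c; split; [lra|]. rewrite !Rabs_left1 by lra. lra.
Qed.

Lemma alg1 (I Fl Hl a b l : R) : I = Fl*(b-a) + Hl*((b-l)^2-(a-l)^2)/2 + (I - (Fl*b + Hl*(b-l)^2/2 - (Fl*a+Hl*(a-l)^2/2))).
Proof. field. Qed.

Section Taylor.
Variables (F H G : R -> R) (B2 : R).
Hypothesis dF : forall s, derivable_pt_lim F s (H s).
Hypothesis dH : forall s, derivable_pt_lim H s (G s).
Hypothesis bG : forall s, Rabs (G s) <= B2.

Lemma lipH s t : Rabs (H s - H t) <= B2 * Rabs (s - t).
Proof.
  destruct (MVT_any H G t s dH) as [c [E _]]. rewrite E, Rabs_mult.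
  apply Rmult_le_compat_r; [apply Rabs_pos|auto].
Qed.

Lemma taylor l s : Rabs (F s - F l - H l * (s - l)) <= B2 * (s - l) ^ 2.
Proof.
  set (psi := fun s => F s - F l - H l * (s - l)).
  assert (dpsi : forall s0, derivable_pt_lim psi s0 (H s0 - H l)).
  { intros s0. replace (H s0 - H l) with (H s0 - 0 - H l * (1 - 0)) by ring.
    apply (derivable_pt_lim_minus (fun s => F s - F l) (fun s => H l * (s - l))).
    - apply (derivable_pt_lim_minus F (fun _ => F l)); auto.
      apply derivable_pt_lim_const.
    - apply (derivable_pt_lim_scal (fun s => s - l)).
      apply (derivable_pt_lim_minus id (fun _ => l)).
      + apply derivable_pt_lim_id.
      + apply derivable_pt_lim_const. }
  destruct (MVT_any psi _ l s dpsi) as [c [E Hc]].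
  change (Rabs (psi s) <= B2 * (s - l) ^ 2).
  replace (psi s) with (psi s - psi l) by (unfold psi; ring).
  rewrite E, Rabs_mult. rewrite <- pow2_abs. simpl.
  pose proof (lipH c l). pose proof (Rabs_pos (s - l)). pose proof (Rabs_pos (c - l)).
  assert (0 <= B2) by (pose proof (bG 0); pose proof (Rabs_pos (G 0)); lra).
  rewrite Rmult_1_r, <- Rmult_assoc.
  apply Rmult_le_compat_r; auto. eapply Rle_trans; [apply H0|].
  apply Rmult_le_compat_l; auto.
Qed.

Lemma contF s : continuous F s.
Proof. apply continuity_pt_filterlim. exact (derivable_continuous_pt F s (exist _ (H s) (dF s))). Qed.

Lemma integ l a b : a <= b -> ex_RInt F a b /\ exists R,
  RInt F a b = F l * (b - a) + H l * ((b - l) ^ 2 - (a - l) ^ 2) / 2 + R /\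
  Rabs R <= (b - a) * (B2 * (Rabs (a - l) + (b - a)) ^ 2).
Proof.
  intros hab.
  assert (exF : ex_RInt F a b) by (apply (ex_RInt_continuous (V:=R_CompleteNormedModule)); intros; apply contF).
  split; auto.
  set (P := fun t => F l + H l * (t - l)).
  set (Q := fun t => F l * t + H l * (t - l) ^ 2 / 2).
  assert (iP : is_RInt P a b (minus (Q b) (Q a))).
  { apply (is_RInt_derive (V:=R_CompleteNormedModule)).
    - intros t _. unfold Q, P. auto_derive; auto. field.
    - intros t _. apply continuity_pt_filterlim. apply derivable_continuous_pt. unfold P. reg. }
  assert (exP : ex_RInt P a b) by (eexists; exact iP).
  assert (E : RInt (fun t => F t - P t) a b = RInt F a b - RInt P a b)
    by exact (RInt_minus F P a b exF exP).
  assert (exD : ex_RInt (fun t => F t - P t) a b) by exact (ex_RInt_minus F P a b exF exP).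
  exists (RInt (fun t => F t - P t) a b). split.
  - rewrite E. rewrite (is_RInt_unique P a b _ iP). change (minus (Q b) (Q a)) with (Q b - Q a). unfold Q. apply alg1.
  - apply abs_RInt_le_const; auto. intros t Ht. unfold P. cbv beta. replace (F t - (F l + H l * (t - l))) with (F t - F l - H l * (t - l)) by ring.
    eapply Rle_trans; [apply taylor|]. apply Rmult_le_compat_l.
    + pose proof (bG 0); pose proof (Rabs_pos (G 0)); lra.
    + rewrite <- (pow2_abs (t - l)). apply pow_incr. split; [apply Rabs_pos|].
      replace (t - l) with ((a - l) + (t - a)) by ring.
      eapply Rle_trans; [apply Rabs_triang|]. rewrite (Rabs_right (t - a)) by lra. lra.
Qed.
End Taylor.

Lemma RInt_eq g a b : ex_RInt g a b -> Defs.RInt g a b = RInt g a b.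
Proof.
  intros He. unfold Defs.RInt.
  destruct excluded_middle_informative as [e|n].
  - destruct constructive_indefinite_description as [pr Hpr]. simpl.
    symmetry. apply RInt_Reals.
  - exfalso. apply n. exists (ex_RInt_Reals_0 _ _ _ He). exact I.
Qed.

Lemma exp_le a b : a <= b -> exp a <= exp b.
Proof. intros [h|h]; [left; apply exp_increasing; auto| right; subst; auto]. Qed.

Lemma chi_bnd chi : (forall u, 0 < u -> continuity_pt chi u) ->
  exists A, 0 <= A /\ forall v, exp (-1) <= v <= exp 1 -> Rabs (chi v) <= A.
Proof.
  intros Hc.
  destruct (continuity_ab_maj (fun v => Rabs (chi v)) (exp (-1)) (exp 1)) as [M [HM _]].
  - apply exp_le; lra.
  - intros c Hc'. apply (continuity_pt_comp chi Rabs).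
    + apply Hc. pose proof (exp_pos (-1)). lra.
    + apply Rcontinuity_abs.
  - exists (Rabs (chi M)). split; [apply Rabs_pos|]. auto.
Qed.

Lemma zpsum_nonneg a N : (forall k, 0 <= a k) -> 0 <= zpsum a N.
Proof.
  intros H. replace 0 with (zpsum (fun k => 0 * a k) N).
  - apply zpsum_le. intros k. specialize (H k). lra.
  - rewrite zpsum_scal. ring.
Qed.

Lemma K_bound chi : kernel chi -> exists K, 0 <= K /\ forall u, 0 < u -> forall N,
  zpsum (fun k => Rabs (chi (exp (- IZR k) * u)) * (Rabs (IZR k - ln u) + 1) ^ 2) N <= K.
Proof.
  intros [Hc [_ [[B HB] _]]].
  destruct (chi_bnd chi Hc) as [A [HA0 HA]].
  assert (B0 : 0 <= B).
  { eapply Rle_trans; [|apply (HB 1 Rlt_0_1 0%nat)]. apply zpsum_nonneg.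
    intros k. apply Rmult_le_pos; [apply Rabs_pos| apply pow_le, Rabs_pos]. }
  exists (4 * B + 4 * A + 4 * A). split; [lra|].
  intros u hu N. set (L := ln u). set (z0 := (up L - 1)%Z).
  eapply Rle_trans.
  - apply (zpsum_le _ (fun k => 4 * (Rabs (chi (exp (- IZR k) * u)) * Rabs (IZR k - ln u) ^ 2)
       + (if Z.eq_dec k z0 then 4 * A else 0) + (if Z.eq_dec k (z0 + 1) then 4 * A else 0))).
    intros k. fold L.
    set (c := Rabs (chi (exp (- IZR k) * u))).
    assert (c0 : 0 <= c) by apply Rabs_pos.
    assert (i1 : 0 <= (if Z.eq_dec k z0 then 4 * A else 0)) by (destruct (Z.eq_dec k z0); lra).
    assert (i2 : 0 <= (if Z.eq_dec k (z0 + 1) then 4 * A else 0)) by (destruct (Z.eq_dec k (z0 + 1)); lra).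
    set (d := Rabs (IZR k - L)). assert (d0 : 0 <= d) by apply Rabs_pos.
    destruct (Rle_dec 1 d) as [h|h].
    + assert (c * (d + 1) ^ 2 <= 4 * (c * d ^ 2)).
      { replace (4 * (c * d ^ 2)) with (c * (2 * d) ^ 2) by ring.
        apply Rmult_le_compat_l; auto. apply pow_incr. lra. }
      lra.
    + assert (hc : c <= A).
      { unfold c. apply HA. rewrite <- (exp_ln u hu). rewrite <- exp_plus.
        unfold d in h. fold L. apply Rnot_le_lt in h.
        apply Rabs_def2 in h. destruct h. split; apply exp_le; lra. }
      assert (c * (d + 1) ^ 2 <= 4 * A).
      { replace (4 * A) with (A * 2 ^ 2) by ring.
        apply Rmult_le_compat; auto. apply pow_le; lra. apply pow_incr. lra. }
      assert (4 * (c * d ^ 2) >= 0).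
      { assert (0 <= c * d ^ 2) by (apply Rmult_le_pos; auto; apply pow_le; auto). lra. }
      apply Rnot_le_lt in h. unfold d in h. apply Rabs_def2 in h. destruct h as [h1 h2].
      destruct (archimed L) as [a1 a2].
      assert (k1 : (up L - 2 < k)%Z).
      { apply lt_IZR. rewrite minus_IZR. lra. }
      assert (k2 : (k < up L + 1)%Z).
      { apply lt_IZR. rewrite plus_IZR. lra. }
      unfold z0. destruct (Z.eq_dec k (up L - 1)); destruct (Z.eq_dec k (up L - 1 + 1));
        try lia; lra.
  - rewrite !zpsum_plus, zpsum_scal.
    pose proof (HB u hu N). pose proof (zpsum_delta (4 * A) z0 N ltac:(lra)).
    pose proof (zpsum_delta (4 * A) (z0 + 1) N ltac:(lra)). lra.
Qed.

Theorem theorem2 (chi f f' g' : R -> R)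
  (Hchi : kernel chi)
  (Hm1 : forall u, 0 < u -> m_moment_is chi 1 u 0)
  (* f in C^(2)(R^+): f, theta f, theta^2 f exist and are bounded continuous *)
  (Hf : bcont f)
  (Hf' : forall x, 0 < x -> derivable_pt_lim f x (f' x))
  (Htf : bcont (theta_of f'))
  (Hg' : forall x, 0 < x -> derivable_pt_lim (theta_of f') x (g' x))
  (Httf : bcont (theta_of g'))
  (x : R) (hx : 0 < x) :
  forall eps, 0 < eps -> exists W, forall w, W < w ->
    Rabs (w * (Iw chi f w x - f x) - theta_of f' x / 2) < eps.
Proof.
  intros eps heps.
  destruct Httf as [_ [B2 HB2]].
  assert (B20 : 0 <= B2) by (pose proof (HB2 1 Rlt_0_1); pose proof (Rabs_pos (theta_of g' 1)); lra).
  destruct (K_bound chi Hchi) as [K [K0 HK]].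
  set (F := fun s => f (exp s)). set (H := fun s => theta_of f' (exp s)).
  set (G := fun s => theta_of g' (exp s)).
  assert (dF : forall s, derivable_pt_lim F s (H s)).
  { intros s. pose proof (derivable_pt_lim_comp exp f s (exp s) (f' (exp s))
      (derivable_pt_lim_exp s) (Hf' _ (exp_pos s))) as h.
    unfold comp in h. unfold H, theta_of. rewrite Rmult_comm. exact h. }
  assert (dH : forall s, derivable_pt_lim H s (G s)).
  { intros s. pose proof (derivable_pt_lim_comp exp (theta_of f') s (exp s) (g' (exp s))
      (derivable_pt_lim_exp s) (Hg' _ (exp_pos s))) as h.
    unfold comp in h. unfold G, H. unfold theta_of at 2. rewrite Rmult_comm. exact h. }
  assert (bG : forall s, Rabs (G s) <= B2) by (intros s; apply HB2, exp_pos).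
  exists (B2 * K / eps + 1). intros w Hw.
  assert (w0 : 0 < w).
  { assert (0 <= B2 * K / eps) by (unfold Rdiv; apply Rmult_le_pos;
      [apply Rmult_le_pos; auto| left; apply Rinv_0_lt_compat; auto]). lra. }
  set (l := ln x). set (u := Rpower x w).
  assert (hu : 0 < u) by apply exp_pos.
  assert (lnu : ln u = w * l) by (unfold u, Rpower; rewrite ln_exp; reflexivity).
  set (th := theta_of f' x).
  assert (Fl : F l = f x) by (unfold F, l; rewrite exp_ln; auto).
  assert (Hl : H l = th) by (unfold H, th, l; rewrite exp_ln; auto).
  assert (step : forall k : Z, ex_RInt F (IZR k / w) (IZR (k + 1) / w) /\
     Rabs (w * RInt F (IZR k / w) (IZR (k + 1) / w) - f x - th * (IZR k - ln u + / 2) / w)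
       <= B2 * (Rabs (IZR k - ln u) + 1) ^ 2 / w ^ 2).
  { intros k. set (a := IZR k / w). set (b := IZR (k + 1) / w).
    assert (hab : a <= b).
    { unfold a, b. rewrite plus_IZR. unfold Rdiv. apply Rmult_le_compat_r.
      left; apply Rinv_0_lt_compat; auto. lra. }
    destruct (integ F H G B2 dF dH bG l a b hab) as [ex [R [E1 E2]]].
    split; auto. rewrite E1.
    set (d := IZR k - ln u).
    assert (Hba : b - a = / w) by (unfold b, a; rewrite plus_IZR; field; lra).
    assert (Ha : a - l = d / w) by (unfold a, d; rewrite lnu; field; lra).
    assert (Hb : b - l = (d + 1) / w) by (unfold b, d; rewrite lnu, plus_IZR; field; lra).
    rewrite Hba, Ha, Hb in *. rewrite Fl, Hl.
    replace (w * (f x * / w + th * (((d + 1) / w) ^ 2 - (d / w) ^ 2) / 2 + R) - f x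
       - th * (d + / 2) / w) with (w * R) by (field; lra).
    rewrite Rabs_mult, (Rabs_right w) by lra.
    replace (Rabs (d / w) + / w) with ((Rabs d + 1) / w) in E2
      by (unfold Rdiv; rewrite Rabs_mult, Rabs_inv, (Rabs_right w) by lra; field; lra).
    apply Rle_trans with (w * (/ w * (B2 * ((Rabs d + 1) / w) ^ 2))).
    - apply Rmult_le_compat_l; lra.
    - right. field. lra. }
  set (c := fun k => chi (exp (- IZR k) * u)).
  set (dd := fun k => IZR k - ln u).
  set (r := fun k => w * RInt F (IZR k / w) (IZR (k + 1) / w) - f x - th * (dd k + / 2) / w).
  assert (Hc : zsum c 1) by (destruct Hchi as [_ [Hi _]]; apply Hi; auto).
  assert (Hd : zsum (fun k => c k * dd k ^ 1) 0) by (apply Hm1; auto).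
  destruct (zsum_dom (fun k => c k * r k)
     (fun k => B2 / w ^ 2 * (Rabs (chi (exp (- IZR k) * u)) * (Rabs (IZR k - ln u) + 1) ^ 2))
     (B2 / w ^ 2 * K)) as [le [Hle Hlb]].
  { intros k. unfold r, c, dd. rewrite Rabs_mult.
    destruct (step k) as [_ hk].
    apply Rle_trans with (Rabs (chi (exp (- IZR k) * u)) * (B2 * (Rabs (IZR k - ln u) + 1) ^ 2 / w ^ 2)).
    - apply Rmult_le_compat_l; [apply Rabs_pos| exact hk].
    - right. field. lra. }
  { intros N. rewrite zpsum_scal. apply Rmult_le_compat_l.
    - unfold Rdiv. apply Rmult_le_pos; auto. left; apply Rinv_0_lt_compat, pow_lt; auto.
    - apply HK; auto. }
  assert (Htot : zsum (fun k => c k * (w * Defs.RInt (fun u => f (exp u)) (IZR k / w) (IZR (k + 1) / w)))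
     (f x * 1 + th / w * 0 + th / (2 * w) * 1 + le)).
  { pose proof (zsum_plus _ _ _ _ (zsum_plus _ _ _ _ (zsum_plus _ _ _ _ (zsum_scal (f x) _ _ Hc)
      (zsum_scal (th / w) _ _ Hd)) (zsum_scal (th / (2 * w)) _ _ Hc)) Hle) as S1.
    eapply zsum_ext; [|exact S1].
    intros k. cbv beta. destruct (step k) as [ex _].
    change (fun u0 => f (exp u0)) with F. rewrite (RInt_eq F _ _ ex).
    unfold r, dd. field. lra. }
  assert (EI : Iw chi f w x = f x * 1 + th / w * 0 + th / (2 * w) * 1 + le)
    by exact (Zser_eq _ _ Htot).
  rewrite EI. fold th.
  replace (w * (f x * 1 + th / w * 0 + th / (2 * w) * 1 + le - f x) - th / 2) with (w * le)
    by (field; lra).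
  rewrite Rabs_mult, (Rabs_right w) by lra.
  apply Rle_lt_trans with (w * (B2 / w ^ 2 * K)).
  - apply Rmult_le_compat_l; lra.
  - replace (w * (B2 / w ^ 2 * K)) with (B2 * K / w) by (field; lra).
    assert (B2 * K < eps * w).
    { replace (B2 * K) with (eps * (B2 * K / eps)) by (field; lra).
      apply Rmult_lt_compat_l; lra. }
    apply (Rmult_lt_reg_r w); auto. replace (B2 * K / w * w) with (B2 * K) by (field; lra). lra.
Qed.
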